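(* Let $\Xi>1$, $\rho:[1,\Xi]\to\mathbb{R}$ continuous, $Z>0$ and $c>-1$, and define for integers $l\geq 0$ \[ \rho_l:=\frac{\delta_{l,0}}{\sqrt{Z}}-\frac12\int_1^\Xi\frac{dT\,\rho(T)}{\sqrt{T+c}^{\,3+2l}}, \] assuming $\rho_0\neq 0$. For integers $B\geq 3$ and $0\le M\le B-3$ define \[ \gamma^M_B:=\frac{1}{\rho_0^{B-3}}\sum_{K=0}^{B-3-M}\frac{(B-3+K)!}{(B-3-M)!\,M!}\,B_{B-3-M,K}\Big(\Big\{-\frac{(2r+1)!!\,\rho_r}{(r+1)\rho_0}\Big\}_{r=1}^{B-2-M-K}\Big), \] and set $\gamma^M_B:=0$ for $M<0$ or $M>B-3$. Then $\gamma^M_3=\delta_{M,0}$, and for all $B\geq 4$ and $0\le M\le B-3$: \[ \sum_{j=0}^{B-3-M}\binom{M+j}{j}(2j+1)!!\,\rho_j\,\gamma^{M+j}_B=\gamma^{M-1}_{B-1}, \qquad \sum_{j=0}^{B-4-M}\binom{M+1+j}{j+1}(2j+3)!!\,\rho_j\,\gamma^{M+1+j}_B=(2M+B-1)\,\gamma^M_{B-1}. \] Moreover, $(\gamma^M_B)$ is the unique family of numbers with $\gamma^M_3=\delta_{M,0}$ satisfying the first of these equations for all $B\geq4$, $0\le M\le B-3$.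
   Context: Bell polynomials: $B_{0,k}(\{\})=\delta_{k,0}$, and for $n\geq1$, $B_{n,k}(x_1,\dots,x_{n-k+1})=\sum\frac{n!}{j_1!j_2!\cdots j_{n-k+1}!}\big(\frac{x_1}{1!}\big)^{j_1}\cdots\big(\frac{x_{n-k+1}}{(n-k+1)!}\big)^{j_{n-k+1}}$, the sum over nonnegative integers with $j_1+\dots+j_{n-k+1}=k$ and $1j_1+2j_2+\dots+(n-k+1)j_{n-k+1}=n$ (so $B_{n,0}=0$ for $n\ge1$). $(2j+1)!!=1\cdot3\cdots(2j+1)$, with $(-1)!!=1$. *)

(* Defs.v *)
From HB Require Import structures.
From mathcomp Require Import all_boot all_order all_algebra.
From mathcomp Require Import all_classical all_reals all_analysis.
Set Implicit Arguments. Unset Strict Implicit. Unset Printing Implicit Defensive.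
Import Order.TTheory GRing.Theory Num.Theory numFieldNormedType.Exports.
Local Open Scope ring_scope.

Definition odd_dfact (j : nat) : nat := \prod_(i < j.+1) (2 * i + 1)%N.

(* Partial Bell polynomial B_{n,k}(x_1, ..., x_{n-k+1}), with x given as a
   sequence x : nat -> R (only x 1, ..., x (n-k+1) are used).
   B_{0,k} = delta_{k,0}; for n >= 1 it is the sum over tuples
   (j_1, ..., j_{n-k+1}) of nonnegative integers (each necessarily <= k)
   with sum j_i = k and sum i j_i = n. Index i : 'I_(n+1-k) stands for i+1. *)
Definition bell {R : realType} (n k : nat) (x : nat -> R) : R :=
  if n == 0%N then (k == 0%N)%:R else
  \sum_(j : {ffun 'I_(n.+1 - k) -> 'I_k.+1} |
          ((\sum_(i < n.+1 - k) (j i : nat))%N == k) &&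
          ((\sum_(i < n.+1 - k) (i.+1 * j i))%N == n))
     ((n`!)%:R / (\prod_(i < n.+1 - k) ((j i)`!)%:R) *
      \prod_(i < n.+1 - k) (x i.+1 / (i.+1)`!%:R) ^+ (j i)).

Definition rho_l {R : realType} (Xi Z c : R) (rho : R -> R) (l : nat) : R :=
  (l == 0%N)%:R / Num.sqrt Z
  - 2^-1 * Rintegral lebesgue_measure `[1, Xi]%classic
      (fun T => rho T / (Num.sqrt (T + c)) ^+ (3 + 2 * l)).

Definition gamma_nat {R : realType} (r : nat -> R) (B M : nat) : R :=
  (r 0%N ^+ (B - 3))^-1 *
  \sum_(0 <= K < (B - 3 - M).+1)
     ((B - 3 + K)`!%:R / ((B - 3 - M)`!%:R * M`!%:R) *
      bell (B - 3 - M) K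
        (fun rr => - ((odd_dfact rr)%:R * r rr) / (rr.+1%:R * r 0%N))).

Definition gamma {R : realType} (r : nat -> R) (B : nat) (M : int) : R :=
  match M with
  | Posz m => if (3 <= B)%N && (m <= B - 3)%N then gamma_nat r B m else 0
  | Negz _ => 0
  end.

(* Main.v *)
Require Import Defs.
From HB Require Import structures.
From mathcomp Require Import all_boot all_order all_algebra.
From mathcomp Require Import all_classical all_reals all_analysis.
From mathcomp Require Import zify ring.
Set Implicit Arguments. Unset Strict Implicit. Unset Printing Implicit Defensive.
Import Order.TTheory GRing.Theory Num.Theory numFieldNormedType.Exports.
Local Open Scope ring_scope.

Section PolyPart.
Variable R : fieldType.
Implicit Types p q : {poly R}.

Lemma coefM0 p q d : (forall j, (j < d)%N -> q`_j = 0) ->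
  forall k, (k < d)%N -> (p * q)`_k = 0.
Proof.
move=> hq k hk; rewrite coefM big1 // => j _; rewrite hq ?mulr0 //.
apply: leq_ltn_trans (leq_subr j k) hk.
Qed.

Lemma val_pow p K : p`_0 = 0 -> forall j, (j < K)%N -> (p ^+ K)`_j = 0.
Proof.
move=> p0; elim: K => [//|K IH] j hj.
rewrite exprS coefM big1 // => [[u hu]] _ /=.
case: u hu => [|u] hu; first by rewrite p0 mul0r.
rewrite IH ?mulr0 //; lia.
Qed.

Lemma pow_agree p q N : p`_0 = 0 -> q`_0 = 0 ->
  (forall j, (j <= N)%N -> p`_j = q`_j) ->
  forall K j, (j < N + K)%N -> (p ^+ K)`_j = (q ^+ K)`_j.
Proof.
move=> p0 q0 hpq; elim=> [|K IH] j hj; first by rewrite !expr0.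
rewrite !exprS !coefM; apply: eq_bigr => [[u hu]] _ /=.
case: (leqP u N) => huN.
  case: u hu huN => [|u] hu huN; first by rewrite p0 q0 !mul0r.
  rewrite hpq // IH //; lia.
rewrite (val_pow p0) ?(val_pow q0) ?mulr0 //; lia.
Qed.

Definition Fp (c : nat -> R) D : {poly R} := \sum_(i < D) c i *: 'X^(i.+1).

Lemma coefFp c D j : (Fp c D)`_j = if (0 < j <= D)%N then c j.-1 else 0.
Proof.
rewrite /Fp coef_sum.
under eq_bigr do rewrite coefZ coefXn.
case: j => [|j] /=.
  by rewrite big1 // => i _; rewrite mulr0.
transitivity (\sum_(i < D | (i : nat) == j) c i).
  rewrite [RHS]big_mkcond; apply: eq_bigr => i _ /=; rewrite eqSS eq_sym.
  by case: eqP => _; rewrite ?mulr1 ?mulr0.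
by rewrite big_ord1_eq.
Qed.

Lemma Fp0 c D : (Fp c D)`_0 = 0.
Proof. by rewrite coefFp. Qed.

Definition Gp c D n : {poly R} :=
  \sum_(0 <= K < D.+1) 'C(n + K, K)%:R *: (Fp c D) ^+ K.

Lemma GpA c D n : Gp c D n.+1 - Fp c D * Gp c D n.+1 =
  Gp c D n - 'C(n.+1 + D, D)%:R *: (Fp c D) ^+ D.+1.
Proof.
set F := Fp c D.
have e1 : Gp c D n.+1 = 1 + \sum_(0 <= K < D) 'C(n.+1 + K.+1, K.+1)%:R *: F ^+ K.+1.
  by rewrite /Gp big_nat_recl // addn0 bin0 expr0 scale1r.
have e3 : Gp c D n = 1 + \sum_(0 <= K < D) 'C(n + K.+1, K.+1)%:R *: F ^+ K.+1.
  by rewrite /Gp big_nat_recl // addn0 bin0 expr0 scale1r.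
have e2 : F * Gp c D n.+1 = \sum_(0 <= K < D) 'C(n.+1 + K, K)%:R *: F ^+ K.+1
     + 'C(n.+1 + D, D)%:R *: F ^+ D.+1.
  rewrite /Gp mulr_sumr big_nat_recr //=; congr (_ + _); last by rewrite -scalerAr -exprS.
  by apply: eq_bigr => K _; rewrite -scalerAr -exprS.
have hS : \sum_(0 <= K < D) 'C(n.+1 + K.+1, K.+1)%:R *: F ^+ K.+1 =
   \sum_(0 <= K < D) 'C(n.+1 + K, K)%:R *: F ^+ K.+1 +
   \sum_(0 <= K < D) 'C(n + K.+1, K.+1)%:R *: F ^+ K.+1.
  rewrite -big_split /=; apply: eq_bigr => K _.
  by rewrite addnS binS addSnnS natrD scalerDl addrC.
rewrite e2 e1 e3 hS; set S2 := \sum_(0 <= K < D) _; set S3 := \sum_(0 <= K < D) _.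
set T := _ *: _; ring.
Qed.

Lemma GpR c D n : Gp c D n.+1 = \sum_(0 <= K < D) 'C(n.+1 + K, K)%:R *: (Fp c D) ^+ K
   + 'C(n.+1 + D, D)%:R *: (Fp c D) ^+ D.
Proof. by rewrite /Gp big_nat_recr. Qed.

Lemma GpB c D n : (Gp c D n)^`() =
  n.+1%:R *: ((Fp c D)^`() * \sum_(0 <= K < D) 'C(n.+1 + K, K)%:R *: (Fp c D) ^+ K).
Proof.
set F := Fp c D.
rewrite /Gp big_nat_recl // derivD raddf_sum /= derivZ expr0 derivC scaler0 add0r.
rewrite mulr_sumr scaler_sumr; apply: eq_bigr => K _.
rewrite derivZ deriv_exp /= -scalerAr scalerA -scaler_nat scalerA -!natrM.
congr (_%:R *: _).
have h := mul_bin_left (n + K.+1) K.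
have e : (n + K.+1 - K = n.+1)%N by lia. rewrite e in h.
rewrite -addSnnS in h; rewrite mulnC -h.
by rewrite -addSnnS.
Qed.

Lemma coefGpB c D n k : (k < D)%N ->
  (Gp c D n)`_k.+1 * k.+1%:R = n.+1%:R * ((Fp c D)^`() * Gp c D n.+1)`_k.
Proof.
move=> hk.
have z : ((Fp c D)^`() * (Fp c D) ^+ D)`_k = 0.
  by apply: (@coefM0 _ _ D) => // j hj; rewrite val_pow // Fp0.
rewrite mulr_natr -coef_deriv GpB coefZ [in RHS]GpR mulrDr coefD.
by rewrite -scalerAr coefZ z mulr0 addr0 mulr_natl.
Qed.

Lemma core c D (a b : R) n k : (k <= D)%N ->
  n.+1%:R * ((a%:P - a *: Fp c D - b *: ('X * (Fp c D)^`())) * Gp c D n.+1)`_k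
  = (a * n.+1%:R - b * k%:R) * (Gp c D n)`_k.
Proof.
move=> hk; set F := Fp c D.
have -> : (a%:P - a *: F - b *: ('X * F^`())) * Gp c D n.+1 =
    a *: (Gp c D n.+1 - F * Gp c D n.+1) - b *: ('X * (F^`() * Gp c D n.+1)).
  by rewrite !mulrBl -!scalerAl mul_polyC scalerBr mulrA.
rewrite GpA coefB !coefZ coefB coefZ coefXM (val_pow (Fp0 c D)) //.
rewrite mulr0 subr0.
case: k hk => [|k] hk /=; first by ring.
have := coefGpB c n hk; rewrite -/F => h.
rewrite mulrBr [n.+1%:R * (b * _)]mulrCA -h; ring.
Qed.
End PolyPart.

Section Multinom.
Variable R : numFieldType.

Lemma factr_neq0 m : (m`!%:R : R) != 0.
Proof. by rewrite pnatr_eq0 -lt0n fact_gt0. Qed.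

Definition Ep K (a : {poly R}) : {poly {poly R}} :=
  \sum_(l < K.+1) ((l`!%:R^-1 *: a ^+ l)%:P * 'X^l).

Lemma coefEp K a u : (u <= K)%N -> (Ep K a)`_u = u`!%:R^-1 *: a ^+ u.
Proof.
move=> hu; rewrite /Ep coef_sum.
under eq_bigr do rewrite coefCM coefXn.
transitivity (\sum_(l < K.+1 | (l : nat) == u) (l`!%:R^-1 *: a ^+ l)).
  rewrite [RHS]big_mkcond; apply: eq_bigr => i _ /=; rewrite eq_sym.
  by case: eqP => _; rewrite ?mulr1 ?mulr0.
by rewrite (big_ord1_eq _ (fun l => l`!%:R^-1 *: a ^+ l)) ltnS hu.
Qed.

Lemma prodEp K (I : Type) (b : I -> {poly R}) (s : seq I) l : (l <= K)%N ->
  (\prod_(i <- s) Ep K (b i))`_l = l`!%:R^-1 *: (\sum_(i <- s) b i) ^+ l.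
Proof.
elim: s l => [|x s IH] l hl.
  rewrite !big_nil coef1; case: l hl => [|l] _ /=; first by rewrite invr1 expr0 scale1r.
  by rewrite expr0n /= scaler0.
rewrite !big_cons coefM addrC exprDn scaler_sumr; apply: eq_bigr => [[u hu]] _ /=.
rewrite coefEp; last by lia.
rewrite IH; last by lia.
rewrite -scalerAl -scalerAr scalerA -[_ *+ 'C(l, u)]scaler_nat scalerA.
have hul : (u <= l)%N by lia.
congr (_ *: _); last by rewrite mulrC.
rewrite -(bin_fact hul) !natrM.
have := factr_neq0 u; have := factr_neq0 (l - u).
have : ('C(l, u)%:R : R) != 0 by rewrite pnatr_eq0 -lt0n bin_gt0.
move=> h1 h2 h3; field; rewrite h1 h2 h3 //.
Qed.

Lemma multinom (I : finType) (b : I -> {poly R}) K :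
  \sum_(j : {ffun I -> 'I_K.+1} | (\sum_i (j i : nat) == K)%N)
     \prod_i ((j i)`!%:R^-1 *: b i ^+ j i) = K`!%:R^-1 *: (\sum_i b i) ^+ K.
Proof.
rewrite -(@prodEp K) //.
have eA : \prod_i Ep K (b i) = \sum_(j : {ffun I -> 'I_K.+1})
   ((\prod_i ((j i)`!%:R^-1 *: b i ^+ j i))%:P * 'X^(\sum_i (j i : nat))).
  rewrite /Ep bigA_distr_bigA; apply: eq_bigr => j _.
  by rewrite big_split /= -rmorph_prod prodrXr.
rewrite eA coef_sum.
under [RHS]eq_bigr do rewrite coefCM coefXn.
rewrite [LHS]big_mkcond; apply: eq_bigr => j _ /=; rewrite eq_sym.
by case: eqP => _; rewrite ?mulr1 ?mulr0.
Qed.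
End Multinom.

Section BellPart.
Variable R : realType.

Definition cc (x : nat -> R) i := x i.+1 / (i.+1)`!%:R.

Lemma bellE m K (x : nat -> R) D : (m < D)%N ->
  bell m K x = m`!%:R / K`!%:R * ((Fp (cc x) D) ^+ K)`_m.
Proof.
move=> hmD.
case: m hmD => [|m] hmD.
  rewrite /bell /=; case: K => [|K]; first by rewrite expr0 coef1 /= divr1 mulr1.
  by rewrite (val_pow (Fp0 _ _)) // mulr0.
have hagree : ((Fp (cc x) D) ^+ K)`_m.+1 = ((Fp (cc x) (m.+2 - K)) ^+ K)`_m.+1.
  apply: (@pow_agree _ _ _ (m.+2 - K)); rewrite ?Fp0 //; last by lia.
  move=> j hj; rewrite !coefFp.
  have h1 : (j <= D)%N by lia.
  have h2 : (j <= m.+2 - K)%N by lia.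
  by rewrite h1 h2.
rewrite hagree.
have eF : Fp (cc x) (m.+2 - K) = \sum_(i < m.+2 - K) cc x i *: 'X^(i.+1) by [].
rewrite eF.
have hK := multinom (fun i : 'I_(m.+2 - K) => cc x i *: 'X^(i.+1)) K.
have -> : (\sum_(i < m.+2 - K) cc x i *: 'X^(i.+1)) ^+ K =
   K`!%:R *: (K`!%:R^-1 *: (\sum_(i < m.+2 - K) cc x i *: 'X^(i.+1)) ^+ K).
  by rewrite scalerA divff ?factr_neq0 // scale1r.
rewrite -hK coefZ coef_sum.
have eP : forall j : {ffun 'I_(m.+2 - K) -> 'I_K.+1},
    \prod_i ((j i)`!%:R^-1 *: (cc x i *: 'X^(i.+1)) ^+ j i) =
    (\prod_(i < m.+2 - K) ((j i)`!%:R^-1 * cc x i ^+ j i)) *: 'X^(\sum_(i < m.+2 - K) (i.+1 * j i))%N.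
  move=> j; rewrite -prodrXr -scaler_prod; apply: eq_bigr => i _.
  by rewrite exprZn scalerA exprM.
under eq_bigr do rewrite eP coefZ coefXn.
rewrite mulrA divfK ?factr_neq0 // mulr_sumr.
rewrite /bell /= big_mkcondr; apply: eq_bigr => j _; rewrite eq_sym.
case: eqP => _; rewrite ?mulr1 ?mulr0 //.
by rewrite big_split /= prodfV mulrA.
Qed.
End BellPart.

Section GammaPart.
Variable R : realType.
Variable r : nat -> R.
Hypothesis r0 : r 0%N != 0.

Definition xr := fun rr => - ((odd_dfact rr)%:R * r rr) / (rr.+1%:R * r 0%N).
Definition FF D := Fp (cc xr) D.
Definition GG D n := Gp (cc xr) D n.

Lemma gamma_natE B M D : (M <= B - 3)%N -> (B - 3 < D)%N ->
  gamma_nat r B M = (r 0%N ^+ (B - 3))^-1 * ((B - 3)`!%:R / M`!%:R) *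
     (GG D (B - 3))`_(B - 3 - M).
Proof.
move=> hM hD; rewrite /gamma_nat -mulrA; congr (_ * _).
set n := (B - 3)%N in hM hD *; set m := (n - M)%N.
have hmD : (m < D)%N by lia.
under eq_bigr do rewrite (bellE _ _ hmD) -/xr.
rewrite /GG /Gp coef_sum [in RHS](big_cat_nat _ (n := m.+1)) //=; last by lia.
rewrite [X in _ * (_ + X)]big_nat_cond [X in _ * (_ + X)]big1 ?addr0; last first.
  move=> K /andP[/andP[hK _] _]; rewrite coefZ (val_pow (Fp0 _ _)) ?mulr0 //.
rewrite mulr_sumr; apply: eq_bigr => K _; rewrite coefZ.
have hfK := factr_neq0 R K; have hfm := factr_neq0 R m; have hfM := factr_neq0 R M.
have hfn := factr_neq0 R n.
have hC : ('C(n + K, K)%:R : R) != 0 by rewrite pnatr_eq0 -lt0n bin_gt0; lia.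
have e := bin_fact (leq_addl n K).
rewrite addnK in e.
rewrite -e !natrM; field.
by rewrite hfK hfm hfM.
Qed.

Definition WW D a b := a%:P - a *: FF D - b *: ('X * (FF D)^`()).

Lemma coefW D a b j : (j <= D)%N ->
  r 0%N * (WW D a b)`_j * (j.+1)`!%:R = (a + b * j%:R) * ((odd_dfact j)%:R * r j).
Proof.
move=> hj; rewrite /WW /FF !coefB coefC !coefZ coefXM.
case: j hj => [|j] hj /=.
  rewrite coefFp /= /odd_dfact big_ord1 /= muln0 add0n.
  have -> : (1`! = 1)%N by [].
  ring.
rewrite (coef_deriv (Fp (cc xr) D) j) !coefFp /=.
rewrite hj /cc /xr (factS j.+1) (natrM _ j.+2 (j.+1)`!).
have h1 := factr_neq0 R j.+1.
have h2 : (j.+2%:R : R) != 0 by rewrite pnatr_eq0.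
move: ((odd_dfact j.+1)%:R) (r j.+1) ((j.+1)`!%:R) h1 => q rj f h1.
rewrite -mulr_natr.
field.
by rewrite h1 r0 /= -natrD pnatr_eq0.
Qed.
End GammaPart.

Section Main.
Variable R : realType.
Variable r : nat -> R.
Hypothesis r0 : r 0%N != 0.

Lemma gammaP B M : (3 <= B)%N -> (M <= B - 3)%N -> gamma r B M%:Z = gamma_nat r B M.
Proof. by move=> h1 h2; rewrite /gamma h1 h2. Qed.

Lemma ident1 B M : (4 <= B)%N -> (M <= B - 3)%N ->
  \sum_(0 <= j < B - 2 - M)
        ('C(M + j, j)%:R * (odd_dfact j)%:R * r j * gamma r B (M + j)%N%:Z)
     = gamma r B.-1 (M%:Z - 1).
Proof.
move=> hB hM.
have [b eB] : exists b, B = b.+4 by exists (B - 4)%N; lia.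
subst B; rewrite /= in hM.
set k := (b.+1 - M)%N.
have -> : (b.+4 - 2 - M = k.+1)%N by rewrite /k; lia.
rewrite big_mkord.
pose D := b.+4.
have step : forall j : 'I_k.+1,
  'C(M + j, j)%:R * (odd_dfact j)%:R * r j * gamma r b.+4 (M + j)%N%:Z =
  (r 0%N ^+ b.+1)^-1 * (b.+1`!%:R / M`!%:R) * r 0%N *
    ((WW r D 1 1)`_j * (GG r D b.+1)`_(k - j)).
  move=> [j hj] /=.
  have hj' : (M + j <= b.+1)%N by rewrite /k in hj; lia.
  have e3 : (b.+4 - 3 = b.+1)%N by [].
  rewrite e3 hj' (@gamma_natE _ _ r0 _ _ D) ?e3 //.
  have -> : (b.+1 - (M + j) = k - j)%N by rewrite /k; lia.
  have hW := coefW r0 1 1 (j := j) (D := D) ltac:(rewrite /D; lia).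
  have e := bin_fact (leq_addl M j); rewrite addnK in e.
  rewrite -e.
  have hC : ('C(M + j, j)%:R : R) != 0 by rewrite pnatr_eq0 -lt0n bin_gt0; lia.
  have h1 := factr_neq0 R j; have h2 := factr_neq0 R M.
  have h3 : (j.+1%:R : R) != 0 by rewrite pnatr_eq0.
  move: hW; rewrite (factS j) (natrM _ j.+1 j`!).
  rewrite -mulrA (natrM _ 'C(M + j, j) (j`! * M`!)) (natrM _ j`! M`!).
  rewrite -[_ * _ * r j]mulrA.
  move: ((odd_dfact j)%:R * r j) ((WW r D 1 1)`_j) (GG r D b.+1)`_(k - j) => q w g hW.
  have hq : q = r 0 * w * j`!%:R.
    apply: (mulfI h3); rewrite mul1r nat1r in hW; rewrite -hW; ring.
  rewrite hq; field.
  by rewrite h2 expf_neq0 // h1 hC.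
  rewrite /D; lia.
rewrite (eq_bigr _ (fun j _ => step j)) -mulr_sumr -coefM.
have hc := core (cc (xr r)) (D := D) 1 1 b (k := k) ltac:(rewrite /D /k; lia).
rewrite -/(FF r D) -/(WW r D 1 1) -/(GG r D b.+1) -/(GG r D b) in hc.
rewrite /=.
have hb1 : (b.+1%:R : R) != 0 by rewrite pnatr_eq0.
move: hc; rewrite /k; clear step k; case: M hM => [|M'] hM hc.
  have -> : gamma r b.+3 (0%:Z - 1) = 0 by [].
  rewrite subn0 !mul1r subrr mul0r in hc.
  by move/eqP: hc; rewrite mulf_eq0 (negPf hb1) /= => /eqP ->; rewrite mulr0.
have -> : (M'.+1%:Z - 1 = M'%:Z) by rewrite -addn1 PoszD addrK.
rewrite gammaP //; last by rewrite /=; lia.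
have hS1 : (M' <= b.+3 - 3)%N by lia.
have hS2 : (b.+3 - 3 < D)%N by rewrite /D; lia.
rewrite (gamma_natE r0 hS1 hS2).
have hb3 : (b.+3 - 3 = b)%N by lia.
rewrite hb3; rewrite subSS !mul1r -natrB in hc; last by lia.
have e5 : (b.+1 - (b - M') = M'.+1)%N by lia.
rewrite e5 in hc.
move: hc; move: (WW r D 1 1 * GG r D b.+1)`_(b - M') (GG r D b)`_(b - M') => X Y hc.
have hX : X = M'.+1%:R / b.+1%:R * Y.
  apply: (mulfI hb1); rewrite hc; field.
  by rewrite nat1r.
rewrite hX (factS b) (factS M') (natrM _ b.+1 b`!) (natrM _ M'.+1 M'`!) exprS.
have := factr_neq0 R b; have := factr_neq0 R M'.
have hM1 : (M'.+1%:R : R) != 0 by rewrite pnatr_eq0.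
move=> h1 h2; field.
by rewrite h1 expf_neq0 // !nat1r hb1 hM1 r0.
Qed.

Lemma odd_dfactS j : odd_dfact j.+1 = (odd_dfact j * (2 * j.+1 + 1))%N.
Proof. by rewrite /odd_dfact big_ord_recr. Qed.

Lemma ident2 B M : (4 <= B)%N -> (M <= B - 3)%N ->
  \sum_(0 <= j < B - 3 - M)
        ('C(M + 1 + j, j.+1)%:R * (odd_dfact j.+1)%:R * r j
           * gamma r B (M + 1 + j)%N%:Z)
     = (2 * M + B - 1)%N%:R * gamma r B.-1 M%:Z.
Proof.
move=> hB hM.
have [b eB] : exists b, B = b.+4 by exists (B - 4)%N; lia.
subst B; rewrite /= in hM.
have [hMb | hMb] := leqP M b; last first.
  have -> : (b.+4 - 3 - M = 0)%N by lia.
  rewrite big_geq // /gamma /=.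
  have -> : (M <= b.+3 - 3)%N = false by apply/negbTE; rewrite -ltnNge; lia.
  by rewrite mulr0.
set k := (b - M)%N.
have -> : (b.+4 - 3 - M = k.+1)%N by rewrite /k; lia.
rewrite big_mkord.
pose D := b.+4.
have step : forall j : 'I_k.+1,
  'C(M + 1 + j, j.+1)%:R * (odd_dfact j.+1)%:R * r j * gamma r b.+4 (M + 1 + j)%N%:Z =
  (r 0%N ^+ b.+1)^-1 * (b.+1`!%:R / M`!%:R) * r 0%N *
    ((WW r D 3 2)`_j * (GG r D b.+1)`_(k - j)).
  move=> [j hj] /=.
  have hj' : (M + 1 + j <= b.+4 - 3)%N by rewrite /k in hj; lia.
  have hS2 : (b.+4 - 3 < D)%N by rewrite /D; lia.
  rewrite hj' (gamma_natE r0 hj' hS2).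
  have e3 : (b.+4 - 3 = b.+1)%N by lia.
  rewrite e3.
  have -> : (b.+1 - (M + 1 + j) = k - j)%N by rewrite /k; lia.
  have hW := coefW r0 3 2 (j := j) (D := D) ltac:(rewrite /D; lia).
  have e := bin_fact (leq_addl M j.+1).
  have e6 : (M + j.+1 = M + 1 + j)%N by lia.
  rewrite addnK e6 in e.
  rewrite -e odd_dfactS.
  have hC : ('C(M + 1 + j, j.+1)%:R : R) != 0 by rewrite pnatr_eq0 -lt0n bin_gt0; lia.
  have h1 := factr_neq0 R j.+1; have h2 := factr_neq0 R M.
  rewrite (natrM _ (odd_dfact j) (2 * j.+1 + 1)).
  rewrite (natrM _ 'C(M + 1 + j, j.+1) (j.+1`! * M`!)) (natrM _ j.+1`! M`!).
  move: hW; move: (odd_dfact j)%:R (r j) ((WW r D 3 2)`_j) (GG r D b.+1)`_(k - j) => o rj w g hW.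
  have hq : ((2 * j.+1 + 1)%:R : R) * (o * rj) = r 0 * w * j.+1`!%:R.
    rewrite hW; rewrite natrD natrM; ring.
  have -> : 'C(M + 1 + j, j.+1)%:R * (o * (2 * j.+1 + 1)%:R) * rj =
     'C(M + 1 + j, j.+1)%:R * (((2 * j.+1 + 1)%:R : R) * (o * rj)) by ring.
  rewrite hq; field.
  by rewrite h2 expf_neq0 // h1 hC.
rewrite (eq_bigr _ (fun j _ => step j)) -mulr_sumr -coefM.
have hc := core (cc (xr r)) (D := D) 3 2 b (k := k) ltac:(rewrite /D /k; lia).
rewrite -/(FF r D) -/(WW r D 3 2) -/(GG r D b.+1) -/(GG r D b) in hc.
rewrite (_ : b.+4.-1 = b.+3) //.
have hb1 : (b.+1%:R : R) != 0 by rewrite pnatr_eq0.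
have hS1 : (M <= b.+3 - 3)%N by lia.
have hS2 : (b.+3 - 3 < D)%N by rewrite /D; lia.
rewrite gammaP // (gamma_natE r0 hS1 hS2).
have hb3 : (b.+3 - 3 = b)%N by lia.
rewrite hb3 -/k.
rewrite /k natrB // in hc.
have e7 : (2 * M + b.+4 - 1 = 2 * M + b.+3)%N by lia.
rewrite e7 natrD natrM.
move: hc; move: (WW r D 3 2 * GG r D b.+1)`_k (GG r D b)`_k => X Y hc.
have hX : X = (3 * b.+1%:R - 2 * (b%:R - M%:R)) / b.+1%:R * Y.
  apply: (mulfI hb1); rewrite hc; field.
  by rewrite nat1r.
rewrite hX (factS b) (natrM _ b.+1 b`!) exprS.
have := factr_neq0 R b; have := factr_neq0 R M.
move=> h1 h2; field.
by rewrite h1 expf_neq0 // nat1r hb1 r0.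
Qed.

Lemma gamma3 (M : int) : gamma r 3 M = (M == 0)%:R.
Proof.
case: M => [[|m]|m] //.
rewrite /gamma /= /gamma_nat big_nat1 /bell /= subnn addn0 subn0 fact0 expr0.
by rewrite invr1 !mul1r mulr1 invr1.
Qed.

Lemma uniq_gamma (g : nat -> int -> R) :
  (forall B (M : int), (3 <= B)%N ->
        ((M < 0)%R \/ (B - 3)%N%:Z < M) -> g B M = 0) ->
  (forall M : int, g 3%N M = (M == 0)%:R) ->
  (forall B M : nat, (4 <= B)%N -> (M <= B - 3)%N ->
        \sum_(0 <= j < B - 2 - M)
           ('C(M + j, j)%:R * (odd_dfact j)%:R * r j * g B (M + j)%N%:Z)
        = g B.-1 (M%:Z - 1)) ->
  forall B (M : int), (3 <= B)%N -> g B M = gamma r B M.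
Proof.
move=> hz h3 hrec B M hB.
have [b ->] : exists b, B = (b + 3)%N by exists (B - 3)%N; lia.
elim: b M => [|b IHB] M; first by rewrite add0n h3 gamma3.
rewrite addn3 in IHB; rewrite addSn addn3.
have H : forall d m, (m <= b.+1)%N -> (b.+1 - m)%N = d -> g b.+4 m = gamma r b.+4 m.
  elim/ltn_ind => d IHd m hm hd.
  have hm' : (m <= b.+4 - 3)%N by lia.
  have E1 := hrec b.+4 m isT hm'.
  have E2 := @ident1 b.+4 m isT hm'.
  rewrite (IHB (m%:Z - 1)) -E2 in E1.
  have eS : (b.+4 - 2 - m = (b.+1 - m).+1)%N by lia.
  rewrite eS !big_nat_recl // in E1.
  have eT : \sum_(0 <= i < b.+1 - m)
      ('C(m + i.+1, i.+1)%:R * (odd_dfact i.+1)%:R * r i.+1 * g b.+4 (m + i.+1)%N%:Z) =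
    \sum_(0 <= i < b.+1 - m)
      ('C(m + i.+1, i.+1)%:R * (odd_dfact i.+1)%:R * r i.+1 * gamma r b.+4 (m + i.+1)%N%:Z).
    apply: eq_big_nat => i /andP[_ hi].
    rewrite (IHd (b.+1 - (m + i.+1))%N) //; lia.
  rewrite eT in E1; move/addIr: E1.
  rewrite addn0 bin0 /odd_dfact big_ord1 muln0 add0n !mul1r => /(mulfI r0).
  done.
have [hM | hM] := boolP ((0 <= M)%R && (M <= b.+1%:Z)%R).
  case: M hM => [m|m] //= hM.
  by apply: (H _ m) => //; rewrite lez_nat in hM.
rewrite hz //; last first.
  move: hM; rewrite negb_and -!ltNge => /orP [] h; [left | right] => //.
case: M hM => [m|m] // hM.
rewrite /gamma.
have -> : (m <= b.+4 - 3)%N = false.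
  apply/negbTE; move: hM; rewrite /= lez_nat; lia.
by rewrite andbF.
Qed.
End Main.
Theorem proposition7 (R : realType) (Xi : R) (rho : R -> R) (Z c : R)
  (hXi : 1 < Xi)
  (hrho : {within `[1, Xi], continuous rho}%classic)
  (hZ : 0 < Z) (hc : -1 < c)
  (h0 : rho_l Xi Z c rho 0%N != 0) :
  let r := rho_l Xi Z c rho in
  (forall M : int, gamma r 3 M = (M == 0)%:R) /\
  (forall B M : nat, (4 <= B)%N -> (M <= B - 3)%N ->
     \sum_(0 <= j < B - 2 - M)
        ('C(M + j, j)%:R * (odd_dfact j)%:R * r j * gamma r B (M + j)%N%:Z)
     = gamma r B.-1 (M%:Z - 1)) /\
  (forall B M : nat, (4 <= B)%N -> (M <= B - 3)%N ->
     \sum_(0 <= j < B - 3 - M)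
        ('C(M + 1 + j, j.+1)%:R * (odd_dfact j.+1)%:R * r j
           * gamma r B (M + 1 + j)%N%:Z)
     = (2 * M + B - 1)%N%:R * gamma r B.-1 M%:Z) /\
  (forall g : nat -> int -> R,
     (forall B (M : int), (3 <= B)%N ->
        ((M < 0)%R \/ (B - 3)%N%:Z < M) -> g B M = 0) ->
     (forall M : int, g 3%N M = (M == 0)%:R) ->
     (forall B M : nat, (4 <= B)%N -> (M <= B - 3)%N ->
        \sum_(0 <= j < B - 2 - M)
           ('C(M + j, j)%:R * (odd_dfact j)%:R * r j * g B (M + j)%N%:Z)
        = g B.-1 (M%:Z - 1)) ->
     forall B (M : int), (3 <= B)%N -> g B M = gamma r B M).
Proof.
move=> r.
have r0 : r 0%N != 0 by [].
split; first exact: gamma3.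
split; first by move=> B M hB hM; exact: (ident1 r0 hB hM).
split; first by move=> B M hB hM; exact: (ident2 r0 hB hM).
exact: uniq_gamma r0.
Qed.
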